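(* Fix $M\ge1$, a finite set $\mathcal F$, a matrix $A\in[0,1]^{|\mathcal F|\times M}$, a vector $\boldsymbol\beta\in[0,1]^{|\mathcal F|}$, $D=\mathrm{diag}(1,\dots,M)$ and a constant $C>0$, and assume the set $\mathcal F_0=\{\mathbf w\in\mathbb{R}^M: A\mathbf w=\boldsymbol\beta,\ \mathbf 0\le\mathbf w\le C\mathbf 1\}$ is nonempty. Let $\theta_{\min}=\min_{\mathbf w\in\mathcal F_0}\mathbf 1^\top AD(\mathbf w+\mathbf 1)$ and $\theta_{\max}=\max_{\mathbf w\in\mathcal F_0}\mathbf 1^\top AD(\mathbf w+\mathbf 1)$. For each $n$, let $\hat A_n$ and $\hat{\boldsymbol\beta}_n$ be random estimators with $\max_{f,y}|\hat A_{n,fy}-A_{fy}|=O_p(n^{-1/2})$ and $\max_f|\hat\beta_{n,f}-\beta_f|=O_p(n^{-1/2})$. Let $\hat m_n=\min_{\mathbf 0\le\mathbf w\le C\mathbf 1}\|\hat A_n\mathbf w-\hat{\boldsymbol\beta}_n\|_\infty$, let $\kappa_n>0$ be deterministic, and define the set-expansion estimators \[\hat\theta_{n,\min}=\min\Big\{\mathbf 1^\top\hat A_nD(\mathbf w+\mathbf 1):\ \|\hat A_n\mathbf w-\hat{\boldsymbol\beta}_n\|_\infty\le\hat m_n+\tfrac{\kappa_n}{\sqrt n},\ \mathbf 0\le\mathbf w\le C\mathbf 1\Big\}\] and $\hat\theta_{n,\max}$ analogously with $\max$ in place of $\min$. If $\kappa_n\to\infty$ and $\kappa_n/\sqrt n\to0$,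 then \[\hat\theta_{n,\min}-\theta_{\min}=O_p\Big(\frac{\kappa_n}{\sqrt n}\Big),\qquad \hat\theta_{n,\max}-\theta_{\max}=O_p\Big(\frac{\kappa_n}{\sqrt n}\Big).\]
   Context: In the application, $A=A_x=[\mathbb{P}(R=1,F=f,Y=y\mid X=x)]_{f,y}$ and $\boldsymbol\beta=\boldsymbol\beta_x=(\mathbb{P}(R=0,F=f\mid X=x))_f$ for a fixed covariate stratum $x$, $n$ is the number of sampled units in that stratum, and $C$ is a known bound such that the true weights $w_x(y)=1/\mathbb{P}(R=1\mid Y=y,X=x)-1$ lie in $[0,C]$ (so $\mathcal F_0\neq\emptyset$); $\theta_{\min},\theta_{\max}$ are the bounds on $\mathbb{E}[Y\mid X=x]$. $\|\cdot\|_\infty$ is the max-absolute-entry norm. *)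

(* Defs.v *)
From HB Require Import structures.
From mathcomp Require Import all_boot all_order all_algebra.
From mathcomp Require Import all_classical all_reals all_analysis.
Set Implicit Arguments. Unset Strict Implicit. Unset Printing Implicit Defensive.
Import Order.TTheory GRing.Theory Num.Theory.
Import numFieldNormedType.Exports.
Local Open Scope classical_set_scope.
Local Open Scope ring_scope.

Section Defs.
Variable R : realType.

Definition supnorm (k : nat) (v : 'I_k -> R) : R := \big[Num.max/0]_(i < k) `|v i|.

Definition matvec (k M : nat) (A : 'I_k -> 'I_M -> R) (w : 'I_M -> R) : 'I_k -> R :=
  fun f => \sum_(y < M) A f y * w y.

Definition box (M : nat) (C : R) (w : 'I_M -> R) : Prop :=
  forall y, 0 <= w y <= C.

(* 1^T A D (w + 1), D = diag(1,...,M): the (0-indexed) column y has weight y+1 *)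
Definition objective (k M : nat) (A : 'I_k -> 'I_M -> R) (w : 'I_M -> R) : R :=
  \sum_(f < k) \sum_(y < M) A f y * (y.+1)%:R * (w y + 1).

Definition F0 (k M : nat) (A : 'I_k -> 'I_M -> R) (beta : 'I_k -> R) (C : R) : set ('I_M -> R) :=
  [set w | box C w /\ forall f, matvec A w f = beta f].

Definition theta_min k M (A : 'I_k -> 'I_M -> R) beta C : R :=
  inf [set objective A w | w in F0 A beta C].
Definition theta_max k M (A : 'I_k -> 'I_M -> R) beta C : R :=
  sup [set objective A w | w in F0 A beta C].

Definition mhat k M (A : 'I_k -> 'I_M -> R) (beta : 'I_k -> R) C : R :=
  inf [set supnorm (fun f => matvec A w f - beta f) | w in box C].

(* expanded feasible set with slack t = kappa_n / sqrt n *)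
Definition expanded k M (A : 'I_k -> 'I_M -> R) (beta : 'I_k -> R) C (t : R)
  : set ('I_M -> R) :=
  [set w | box C w /\ supnorm (fun f => matvec A w f - beta f) <= mhat A beta C + t].

Definition thetahat_min k M (A : 'I_k -> 'I_M -> R) beta C t : R :=
  inf [set objective A w | w in expanded A beta C t].
Definition thetahat_max k M (A : 'I_k -> 'I_M -> R) beta C t : R :=
  sup [set objective A w | w in expanded A beta C t].

(* X_n = O_p(a_n), stated with outer probability (so no measurability of X_n is
   needed; coincides with the usual definition when X_n is measurable) *)
Definition Op {d : measure_display} {T : measurableType d}
  (P : probability T R) (X : nat -> T -> R) (a : nat -> R) : Prop :=
  forall eps : R, 0 < eps -> exists Mc : R, exists N : nat, forall n : nat, (N <= n)%N ->
    exists S : set T, [/\ measurable S, [set t | Mc * a n < `|X n t| ] `<=` S &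
                         (P S <= eps%:E)%E].

End Defs.

(* Main.v *)
Require Import Defs.
From HB Require Import structures.
From mathcomp Require Import all_boot all_order all_algebra.
From mathcomp Require Import all_classical all_reals all_analysis.
From mathcomp Require Import ring lra zify.
Import Order.TTheory GRing.Theory Num.Theory.
Import numFieldNormedType.Exports.
Local Open Scope classical_set_scope.
Local Open Scope ring_scope.

Set Implicit Arguments. Unset Strict Implicit. Unset Printing Implicit Defensive.

Section FM.
Variable R : realFieldType.
Definition frow := (seq R * R)%type.
Definition flhs (N : nat) (g : seq R) (x : nat -> R) : R := \sum_(i < N) g`_i * x i.
Definition fsat N (s : seq frow) (x : nat -> R) : Prop :=
  forall c, c \in s -> flhs N c.1 x <= c.2.
Definition fupd (y : nat -> R) n t : nat -> R := fun i => if i == n then t else y i.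

Definition fcomb N n (p q : frow) : frow :=
  (mkseq (fun i => (- q.1`_n) * p.1`_i + p.1`_n * q.1`_i) N,
   (- q.1`_n) * p.2 + p.1`_n * q.2).

Definition fm N n (s : seq frow) : seq frow :=
  [seq c <- s | c.1`_n == 0] ++
  [seq fcomb N n p q | p <- [seq c <- s | 0 < c.1`_n], q <- [seq c <- s | c.1`_n < 0]].

Lemma flhs_upd N g y n t : (n < N)%N ->
  flhs N g (fupd y n t) = flhs N g y + g`_n * (t - y n).
Proof.
move=> hn; rewrite /flhs.
have -> : \sum_(i < N) g`_i * fupd y n t i =
   \sum_(i < N) (g`_i * y i + (if nat_of_ord i == n then g`_n * (t - y n) else 0)).
  apply: eq_bigr => i _; rewrite /fupd; case: eqP => [->|_]; last by rewrite addr0.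
  by rewrite mulrBr addrC subrK.
rewrite big_split /=; congr (_ + _).
rewrite (bigD1 (Ordinal hn)) //= eqxx big1 ?addr0 // => i hi.
case: eqP => // h; move: hi; by rewrite -(inj_eq val_inj) /= h eqxx.
Qed.

Lemma flhs_comb N n p q y :
  flhs N (fcomb N n p q).1 y = (- q.1`_n) * flhs N p.1 y + p.1`_n * flhs N q.1 y.
Proof.
rewrite /flhs !mulr_sumr -big_split /=; apply: eq_bigr => i _.
by rewrite nth_mkseq // mulrDl !mulrA.
Qed.

Lemma fupd_id y n : fupd y n (y n) = y.
Proof. by apply: funext => i; rewrite /fupd; case: eqP => [->|]. Qed.

Lemma bigmax_ge_seq (T : eqType) (F : T -> R) z (s : seq T) x :
  x \in s -> F x <= \big[Num.max/z]_(y <- s) F y.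
Proof.
elim: s => // a s IH; rewrite inE big_cons le_max => /orP[/eqP->|/IH->];
  by rewrite ?lexx ?orbT.
Qed.

Lemma bigmax_le_seq (T : eqType) (F : T -> R) z (s : seq T) b :
  z <= b -> (forall x, x \in s -> F x <= b) -> \big[Num.max/z]_(y <- s) F y <= b.
Proof.
move=> hz h; elim: s h => [|a s IH] h; first by rewrite big_nil.
rewrite big_cons ge_max h ?mem_head //= IH // => x hx; apply: h.
by rewrite inE hx orbT.
Qed.

Lemma bigmin_le_seq (T : eqType) (F : T -> R) z (s : seq T) x :
  x \in s -> \big[Num.min/z]_(y <- s) F y <= F x.
Proof.
elim: s => // a s IH; rewrite inE big_cons ge_min => /orP[/eqP->|/IH->];
  by rewrite ?lexx ?orbT.
Qed.

Lemma bigmin_ge_seq (T : eqType) (F : T -> R) z (s : seq T) b :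
  b <= z -> (forall x, x \in s -> b <= F x) -> b <= \big[Num.min/z]_(y <- s) F y.
Proof.
move=> hz h; elim: s h => [|a s IH] h; first by rewrite big_nil.
rewrite big_cons le_min h ?mem_head //= IH // => x hx; apply: h.
by rewrite inE hx orbT.
Qed.

Lemma fm_sat N n s y : (n < N)%N ->
  fsat N (fm N n s) y <-> exists t, fsat N s (fupd y n t).
Proof.
move=> hn; split; last first.
  move=> [t ht] c; rewrite mem_cat => /orP[|].
    rewrite mem_filter => /andP[/eqP c0 cs].
    by have := ht c cs; rewrite flhs_upd // c0 mul0r addr0.
  case/allpairsP => -[p q] /= [pP qQ ->].
  move: pP qQ; rewrite !mem_filter => /andP[pp ps] /andP[qn qs].
  have hp := ht p ps; have hq := ht q qs.
  rewrite flhs_upd // in hp; rewrite flhs_upd // in hq.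
  rewrite flhs_comb /=.
  set a := p.1`_n in pp hp *; set b := q.1`_n in qn hq *.
  set lp := flhs N p.1 y in hp *; set lq := flhs N q.1 y in hq *.
  have hb : 0 < - b by rewrite oppr_gt0.
  have e1 : (- b) * lp + a * lq = (- b) * (lp + a * (t - y n)) + a * (lq + b * (t - y n)).
    by ring.
  rewrite e1 lerD // ler_pM2l //.
move=> h.
set Z := [seq c <- s | c.1`_n == 0].
set Pp := [seq c <- s | 0 < c.1`_n].
set Nn := [seq c <- s | c.1`_n < 0].
pose U (p : frow) := y n + (p.2 - flhs N p.1 y) / p.1`_n.
pose L (q : frow) := y n + (q.2 - flhs N q.1 y) / q.1`_n.
pose m0 := \big[Num.min/0]_(p <- Pp) U p.
pose t := \big[Num.max/m0]_(q <- Nn) L q.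
have hLU : forall p q, p \in Pp -> q \in Nn -> L q <= U p.
  move=> p q; rewrite !mem_filter => /andP[pp ps] /andP[qn qs].
  have := h (fcomb N n p q); rewrite flhs_comb /=.
  have -> : fcomb N n p q \in fm N n s.
    by rewrite mem_cat; apply/orP; right; apply: allpairs_f; rewrite mem_filter ?pp ?qn.
  move=> /(_ isT) hc.
  rewrite /L /U lerD2l.
  set a := p.1`_n in pp hc *; set b := q.1`_n in qn hc *.
  set lp := flhs N p.1 y in hc *; set lq := flhs N q.1 y in hc *.
  have -> : (q.2 - lq) / b = (lq - q.2) / (- b) by rewrite invrN mulrN -mulNr opprB.
  have hb : 0 < - b by rewrite oppr_gt0.
  rewrite ler_pdivrMr // mulrAC ler_pdivlMr //.
  lra.
exists t => c cs; rewrite flhs_upd //.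
have [c0|cpos|cneg] := ltrgtP 0 c.1`_n.
-
  have cP : c \in Pp by rewrite mem_filter c0.
  have tU : t <= U c.
    apply: bigmax_le_seq; first exact: bigmin_le_seq.
    by move=> q qN; apply: hLU.
  move: tU; rewrite /U; set d := (_ / _) => tU.
  have hd : c.1`_n * d = c.2 - flhs N c.1 y by rewrite /d mulrC divfK // gt_eqF.
  have : c.1`_n * (y n + d - t) >= 0 by apply: mulr_ge0; [exact: ltW|lra].
  lra.
-
  have cN : c \in Nn by rewrite mem_filter cpos.
  have Lt : L c <= t by apply: bigmax_ge_seq.
  move: Lt; rewrite /L; set d := (_ / _) => Lt.
  have hd : c.1`_n * d = c.2 - flhs N c.1 y by rewrite /d mulrC divfK // lt_eqF.
  have : c.1`_n * (t - y n - d) <= 0 by apply: mulr_le0_ge0; [exact: ltW|lra].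
  lra.
- have cZ : c \in fm N n s by rewrite mem_cat mem_filter -cneg eqxx cs.
  by rewrite -cneg mul0r addr0; apply: h.
Qed.

Lemma fupd_fupd y n a b : fupd (fupd y n a) n b = fupd y n b.
Proof. by apply: funext => i; rewrite /fupd; case: eqP. Qed.

Fixpoint felim N k s := match k with 0 => s | k'.+1 => felim N k' (fm N k'.+2 s) end.

Lemma felim_sat N k s x : (k.+2 <= N)%N ->
  fsat N (felim N k s) x <->
  exists y, (forall i, (i < 2)%N \/ (k.+2 <= i)%N -> y i = x i) /\ fsat N s y.
Proof.
elim: k s x => [|k IH] s x hk /=.
  split; first by move=> h; exists x.
  move=> [y [hy sy]]; rewrite (_ : x = y) //; apply: funext => i; symmetry; apply: hy.
  by case: (ltnP i 2); auto.
rewrite IH; last by lia.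
split.
  move=> [y [hy /fm_sat hf]]; have [t ht] := hf ltac:(lia).
  exists (fupd y k.+2 t); split => // i hi; rewrite /fupd; case: eqP => [e|ne].
    by exfalso; case: hi; lia.
  by apply: hy; case: hi; lia.
move=> [y' [hy' sy']]; exists (fupd y' k.+2 (x k.+2)); split.
  move=> i hi; rewrite /fupd; case: eqP => [->//|ne]; apply: hy'; case: hi; lia.
apply/fm_sat; first lia.
by exists (y' k.+2); rewrite fupd_fupd fupd_id.
Qed.

Definition fpt (z d : R) : nat -> R := fun i => match i with 0 => z | 1 => d | _ => 0 end.

Lemma flhs_pt M g z d : flhs M.+2 g (fpt z d) = g`_0 * z + g`_1 * d.
Proof.
rewrite /flhs !big_ord_recl /= big1 ?addr0 ?addrA // => i _.
by rewrite /fpt /= mulr0.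
Qed.

Lemma fsat_ext N s y y' : (forall i, (i < N)%N -> y i = y' i) -> fsat N s y -> fsat N s y'.
Proof.
move=> h sy c cs; rewrite /flhs.
rewrite (eq_bigr (fun i : 'I_N => c.1`_i * y i)); first exact: sy.
by move=> i _; rewrite h.
Qed.

Lemma sum_ge_seq (T : eqType) (F : T -> R) (s : seq T) x :
  (forall y, 0 <= F y) -> x \in s -> F x <= \sum_(y <- s) F y.
Proof.
move=> h; elim: s => // a s IH; rewrite inE big_cons => /orP[/eqP->|/IH hx].
  by rewrite lerDl sumr_ge0.
by rewrite (le_trans hx) // lerDr.
Qed.

Lemma KL M s : (exists y0, y0 1%N = 0 /\ fsat M.+2 s y0) ->
  exists L, 0 <= L /\ forall y, fsat M.+2 s y -> 0 <= y 1%N ->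
   exists y', [/\ y' 1%N = 0, fsat M.+2 s y' & y' 0%N <= y 0%N + L * y 1%N].
Proof.
move=> [y0 [y01 sy0]].
set E := felim M.+2 M s.
have HS : forall z d, fsat M.+2 E (fpt z d) <->
    exists y, [/\ y 0%N = z, y 1%N = d & fsat M.+2 s y].
  move=> z d; rewrite felim_sat //; split.
    by move=> [y [hy sy]]; exists y; split => //; apply: hy; left.
  move=> [y [h0 h1 sy]].
  exists (fun i => if (i < M.+2)%N then y i else fpt z d i); split.
    move=> i [hi|hi].
      by case: i hi => [|[|]] //= _; rewrite ?h0 ?h1.
    by rewrite ltnNge hi.
  by apply: fsat_ext sy => i ->.
have Hrow : forall z d, fsat M.+2 E (fpt z d) <->
    forall c, c \in E -> c.1`_0 * z + c.1`_1 * d <= c.2.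
  by move=> z d; split => h c cE; have := h c cE; rewrite flhs_pt.
pose L := \sum_(c <- E) `|c.1`_1| / `|c.1`_0|.
have L0 : 0 <= L by apply: sumr_ge0 => c _; apply: divr_ge0.
have S0 : fsat M.+2 E (fpt (y0 0%N) 0) by apply/HS; exists y0.
move/Hrow: S0 => S0.
exists L; split => // y sy yd.
have /Hrow Sy : fsat M.+2 E (fpt (y 0%N) (y 1%N)) by apply/HS; exists y.
have [h|h] := lerP (y0 0%N) (y 0%N + L * y 1%N); first by exists y0.
have : fsat M.+2 E (fpt (y 0%N + L * y 1%N) 0).
  apply/Hrow => c cE; have s0 := S0 c cE; have s1 := Sy c cE.
  move: s0 s1; set a := c.1`_0; set b := c.1`_1; set e := c.2 => s0 s1.
  have [ha|ha|ha] := ltrgtP a 0.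
  - have hL : `|b| / `|a| <= L.
      by apply: (sum_ge_seq (F := fun c : frow => `|c.1`_1| / `|c.1`_0|)) => // c'; apply: divr_ge0.
    have na : `|a| = - a by rewrite ltr0_norm.
    rewrite na ler_pdivrMr ?oppr_gt0 // in hL.
    have hb : - `|b| <= b by rewrite lerNl -normrN ler_norm.
    have : 0 <= (b - a * L) * y 1%N by apply: mulr_ge0 => //; lra.
    lra.
  - have : a * (y 0%N + L * y 1%N) <= a * y0 0%N by rewrite ler_pM2l // ltW.
    lra.
  - by move: s0; rewrite ha !mul0r.
move/HS => [y' [h0 h1 sy']]; exists y'; split => //; by rewrite h0.
Qed.

End FM.

Section App.
Variable R : realType.
Variables (k M : nat).

Definition mkcoef (a b : R) (g : 'I_M -> R) : seq R :=
  mkseq (fun j => match j with 0 => a | 1 => b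
                   | j'.+2 => oapp g 0 (insub j' : option 'I_M) end) M.+2.
Arguments mkcoef : simpl never.
Definition mkrow (a b : R) (g : 'I_M -> R) (e : R) : frow R := (mkcoef a b g, e).

Definition wof (y : nat -> R) : 'I_M -> R := fun i => y i.+2.
Definition yof (z d : R) (w : 'I_M -> R) : nat -> R :=
  fun j => match j with 0 => z | 1 => d | j'.+2 => oapp w 0 (insub j' : option 'I_M) end.

Lemma wof_yof z d w : wof (yof z d w) = w.
Proof. by apply: funext => i; rewrite /wof /= valK. Qed.

Lemma flhs_mkrow a b g e y :
  flhs M.+2 (mkrow a b g e).1 y = a * y 0%N + b * y 1%N + \sum_(i < M) g i * wof y i.
Proof.
rewrite /flhs /= /mkcoef !big_ord_recl addrA; congr (_ + _ + _).
apply: eq_bigr => i _; rewrite nth_mkseq; last by rewrite /= /bump /=; have := ltn_ord i; lia.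
by rewrite /bump /= valK.
Qed.

Variables (A : 'I_k -> 'I_M -> R) (beta : 'I_k -> R) (C : R).

Definition sys (c : 'I_M -> R) (c0 : R) : seq (frow R) :=
  [:: mkrow 1 0 (fun i => - c i) c0; mkrow (-1) 0 c (- c0)]
  ++ [seq mkrow 0 (-1) (A f) (beta f) | f <- enum 'I_k]
  ++ [seq mkrow 0 (-1) (fun y => - A f y) (- beta f) | f <- enum 'I_k]
  ++ [seq mkrow 0 0 (fun i => - (i == y)%:R) 0 | y <- enum 'I_M]
  ++ [seq mkrow 0 0 (fun i => (i == y)%:R) C | y <- enum 'I_M].

Lemma sumN_l (g w : 'I_M -> R) : \sum_(i < M) (- g i) * w i = - \sum_(i < M) g i * w i.
Proof. by rewrite -sumrN; apply: eq_bigr => i _; rewrite mulNr. Qed.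

Lemma sum_delta (w : 'I_M -> R) y : \sum_(i < M) (i == y)%:R * w i = w y.
Proof.
rewrite (bigD1 y) //= eqxx mul1r big1 ?addr0 // => i /negbTE ->; by rewrite mul0r.
Qed.

Lemma sys_sat c c0 y :
  fsat M.+2 (sys c c0) y <->
  [/\ y 0%N = \sum_(i < M) c i * wof y i + c0,
      forall f, `|matvec A (wof y) f - beta f| <= y 1%N & box C (wof y)].
Proof.
split.
  move=> h.
  have r1 := h _ (_ : mkrow 1 0 (fun i => - c i) c0 \in sys c c0).
  have r2 := h _ (_ : mkrow (-1) 0 c (- c0) \in sys c c0).
  rewrite !flhs_mkrow sumN_l /= in r1 r2.
  have m1 : mkrow 1 0 (fun i => - c i) c0 \in sys c c0 by rewrite /sys mem_cat !inE eqxx.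
  have m2 : mkrow (-1) 0 c (- c0) \in sys c c0 by rewrite /sys mem_cat !inE eqxx ?orbT.
  have {r1 r2} := (r1 m1, r2 m2) => -[r1 r2].
  have mA f : mkrow 0 (-1) (A f) (beta f) \in sys c c0.
    by rewrite /sys !mem_cat; apply/orP; right; apply/orP; left; apply/mapP; exists f; rewrite ?mem_enum.
  have mNA f : mkrow 0 (-1) (fun y => - A f y) (- beta f) \in sys c c0.
    by rewrite /sys !mem_cat; apply/orP; right; apply/orP; right; apply/orP; left;
       apply/mapP; exists f; rewrite ?mem_enum.
  have mB i : mkrow 0 0 (fun j => - (j == i)%:R) 0 \in sys c c0.
    by rewrite /sys !mem_cat; apply/orP; right; apply/orP; right; apply/orP; right;
       apply/orP; left; apply/mapP; exists i; rewrite ?mem_enum.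
  have mC i : mkrow 0 0 (fun j => (j == i)%:R) C \in sys c c0.
    by rewrite /sys !mem_cat; apply/orP; right; apply/orP; right; apply/orP; right;
       apply/orP; right; apply/mapP; exists i; rewrite ?mem_enum.
  split.
  - lra.
  - move=> f; rewrite ler_norml.
    have := h _ (mA f); have := h _ (mNA f).
    rewrite !flhs_mkrow sumN_l /=.
    move=> a1 a2; rewrite /matvec /wof; apply/andP; split; lra.
  - move=> i.
    have := h _ (mB i); have := h _ (mC i).
    rewrite !flhs_mkrow sumN_l sum_delta /=.
    move=> a1 a2; apply/andP; split; lra.
move=> [h0 h1 h2] r; rewrite /sys !mem_cat => /or4P[|||/orP[]].
- rewrite !inE => /orP[]/eqP->; rewrite flhs_mkrow ?sumN_l /= h0; lra.
- move=> /mapP[f _ ->]; rewrite flhs_mkrow /=.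
  have := h1 f; rewrite ler_norml /matvec => /andP[a1 a2]; lra.
- move=> /mapP[f _ ->]; rewrite flhs_mkrow sumN_l /=.
  have := h1 f; rewrite ler_norml /matvec => /andP[a1 a2]; lra.
- move=> /mapP[i _ ->]; rewrite flhs_mkrow sumN_l sum_delta /=.
  have /andP[a1 a2] := h2 i; lra.
- move=> /mapP[i _ ->]; rewrite flhs_mkrow sum_delta /=.
  have /andP[a1 a2] := h2 i; lra.
Qed.

Lemma det_bound (c : 'I_M -> R) c0 : F0 A beta C !=set0 ->
  exists L, 0 <= L /\ forall d w, 0 <= d -> box C w ->
    (forall f, `|matvec A w f - beta f| <= d) ->
    exists w', F0 A beta C w' /\
      \sum_(i < M) c i * w' i + c0 <= \sum_(i < M) c i * w i + c0 + L * d.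
Proof.
move=> [w0 [bw0 ew0]].
have := @KL R M (sys c c0).
case.
  exists (yof (\sum_(i < M) c i * w0 i + c0) 0 w0); split => //.
  apply/sys_sat; rewrite wof_yof; split => // f.
  by rewrite ew0 subrr normr0.
move=> L [L0 HL]; exists L; split => // d w d0 bw hw.
have [|y' [y1 sy' hy]] := HL (yof (\sum_(i < M) c i * w i + c0) d w) _ d0.
  by apply/sys_sat; rewrite wof_yof.
move/sys_sat: sy' => [h0 h1 h2].
exists (wof y'); split; last by rewrite -h0.
split => // f; apply/eqP; rewrite -subr_eq0 -normr_le0 -y1; exact: h1.
Qed.

Definition cobj (y : 'I_M) : R := \sum_(f < k) A f y * (y.+1)%:R.
Definition c0obj : R := \sum_(f < k) \sum_(y < M) A f y * (y.+1)%:R.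

Lemma objectiveE w : objective A w = \sum_(i < M) cobj i * w i + c0obj.
Proof.
rewrite /objective /cobj /c0obj.
rewrite (eq_bigr (fun f => \sum_(y < M) A f y * (y.+1)%:R * w y +
                            \sum_(y < M) A f y * (y.+1)%:R)); last first.
  by move=> f _; rewrite -big_split; apply: eq_bigr => y _; rewrite mulrDr mulr1.
rewrite big_split /=; congr (_ + _).
rewrite exchange_big; apply: eq_bigr => y _; by rewrite mulr_suml.
Qed.

End App.

Section Bounds.
Variable R : realType.

Lemma bigmax_ge_ord n (F : 'I_n -> R) i : F i <= \big[Num.max/0]_(j < n) F j.
Proof. exact: (bigmax_ge_seq _ _ (mem_index_enum _)). Qed.

Lemma supnorm_ge n (v : 'I_n -> R) i : `|v i| <= supnorm v.
Proof. exact: bigmax_ge_ord. Qed.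

Lemma supnorm_ge0 n (v : 'I_n -> R) : 0 <= supnorm v.
Proof. by apply: (big_rec (fun x => 0 <= x)) => // i x _ hx; rewrite le_max hx orbT. Qed.

Lemma supnorm_le n (v : 'I_n -> R) b : 0 <= b -> (forall i, `|v i| <= b) -> supnorm v <= b.
Proof. by move=> b0 h; apply: (big_rec (fun x => x <= b)) => // i x _ hx; rewrite ge_max h hx. Qed.

Lemma norm_sum_le n (F : 'I_n -> R) e : (forall i, `|F i| <= e) -> `|\sum_(i < n) F i| <= n%:R * e.
Proof.
move=> h; apply: (le_trans (ler_norm_sum _ _ _)).
apply: (le_trans (ler_sum _ (fun i _ => h i))).
by rewrite sumr_const card_ord mulr_natl.
Qed.

Variables (k M : nat) (C : R).
Hypothesis C0 : 0 <= C.

Definition Bc : R := k%:R * (M%:R * (M%:R * (C + 1))).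

Lemma objective_bound (X : 'I_k -> 'I_M -> R) rho w : box C w ->
  (forall f y, `|X f y| <= rho) -> `|objective X w| <= Bc * rho.
Proof.
move=> bw hX.
have -> : Bc * rho = k%:R * (M%:R * (rho * (M%:R * (C+1)))) by rewrite /Bc; ring.
apply: norm_sum_le => f; apply: norm_sum_le => y.
have /andP[w0 wC] := bw y.
rewrite !normrM -mulrA; apply: ler_pM => //.
rewrite (ger0_norm (ltW (ltr0Sn _ _))) ger0_norm; last by lra.
apply: ler_pM => //; last by lra.
  by lra.
by rewrite ler_nat ltn_ord.
Qed.

Lemma objectiveB (X Y : 'I_k -> 'I_M -> R) w :
  objective X w - objective Y w = objective (fun f y => X f y - Y f y) w.
Proof.
rewrite /objective -sumrB; apply: eq_bigr => f _; rewrite -sumrB.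
by apply: eq_bigr => y _; rewrite !mulrBl.
Qed.

Lemma matvec_bound (X : 'I_k -> 'I_M -> R) rho w f : box C w ->
  (forall f y, `|X f y| <= rho) -> `|matvec X w f| <= M%:R * (rho * C).
Proof.
move=> bw hX; apply: norm_sum_le => y; have /andP[w0 wC] := bw y.
by rewrite normrM (ger0_norm w0) ler_pM.
Qed.

Lemma matvecB (X Y : 'I_k -> 'I_M -> R) w f :
  matvec X w f - matvec Y w f = matvec (fun f y => X f y - Y f y) w f.
Proof. by rewrite /matvec -sumrB; apply: eq_bigr => y _; rewrite mulrBl. Qed.

End Bounds.

Section Det.
Variable R : realType.
Variables (k M : nat) (A : 'I_k -> 'I_M -> R) (beta : 'I_k -> R) (C : R).
Hypotheses (hA : forall f y, 0 <= A f y <= 1) (hC : 0 < C) (hF0 : F0 A beta C !=set0).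

Lemma det_main : exists L, 0 <= L /\ forall Ah bh ea eb tau,
  0 <= ea -> 0 <= eb -> (forall f y, `|Ah f y - A f y| <= ea) -> (forall f, `|bh f - beta f| <= eb) ->
  0 < tau -> M%:R * (ea * C) + eb <= tau ->
  `|thetahat_min Ah bh C tau - theta_min A beta C| <=
      L * (2 * (M%:R * (ea * C) + eb) + tau) + Bc k M C * ea /\
  `|thetahat_max Ah bh C tau - theta_max A beta C| <=
      L * (2 * (M%:R * (ea * C) + eb) + tau) + Bc k M C * ea.
Proof.
have C0 : 0 <= C by exact: ltW.
have [L1 [L10 HL1]] := det_bound (cobj A) (c0obj A) hF0.
have [L2 [L20 HL2]] := det_bound (fun i => - cobj A i) (- c0obj A) hF0.
exists (L1 + L2); split; first by rewrite addr_ge0.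
move=> Ah bh ea eb tau ea0 eb0 hea heb tau0 hr.
set r := M%:R * (ea * C) + eb in hr *.
have r0 : 0 <= r by rewrite /r addr_ge0 // mulr_ge0 // mulr_ge0.
have hA1 : forall f y, `|A f y| <= 1.
  by move=> f y; have /andP[a0 a1] := hA f y; rewrite ger0_norm.
have F1 : forall w, box C w -> forall f,
    `|(matvec Ah w f - bh f) - (matvec A w f - beta f)| <= r.
  move=> w bw f.
  have -> : (matvec Ah w f - bh f) - (matvec A w f - beta f) =
            (matvec Ah w f - matvec A w f) - (bh f - beta f) by ring.
  rewrite matvecB; apply: (le_trans (ler_normB _ _)); apply: lerD => //.
  exact: matvec_bound.
have F2 : forall w, box C w -> `|objective Ah w - objective A w| <= Bc k M C * ea.
  by move=> w bw; rewrite objectiveB; apply: objective_bound.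
have FB : forall w, box C w -> `|objective A w| <= Bc k M C * 1.
  by move=> w bw; apply: objective_bound.
have [w0 [bw0 ew0]] := hF0.
set V := [set supnorm (fun f => matvec Ah w f - bh f) | w in box C].
have box0 : box C (fun _ => 0) by rewrite /box => y; rewrite lexx C0.
have Vne : V !=set0 by exists (supnorm (fun f => matvec Ah (fun _ => 0) f - bh f)); exists (fun _ => 0).
have Vlb : has_lbound V by exists 0 => _ [w _ <-]; exact: supnorm_ge0.
have mh0 : 0 <= mhat Ah bh C by apply: lb_le_inf => // _ [w _ <-]; exact: supnorm_ge0.
have mh_le : forall w, box C w -> mhat Ah bh C <= supnorm (fun f => matvec Ah w f - bh f).
  by move=> w bw; apply: (ge_inf Vlb); exists w.
have F0res : forall w, F0 A beta C w -> supnorm (fun f => matvec Ah w f - bh f) <= r.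
  move=> w [bw ew]; apply: supnorm_le => // f.
  by have := F1 w bw f; rewrite ew subrr subr0.
have mhr : mhat Ah bh C <= r by apply: le_trans (mh_le _ bw0) (F0res _ (conj bw0 ew0)).
have F0exp : forall w, F0 A beta C w -> expanded Ah bh C tau w.
  move=> w hw; split; first by case: hw.
  by apply: le_trans (F0res _ hw) _; lra.
have exp_ne : expanded Ah bh C tau !=set0.
  have [e [w bw <-] he] := inf_adherent tau0 (conj Vne Vlb).
  by exists w; split => //; exact: ltW.
have exp_res : forall w, expanded Ah bh C tau w -> forall f,
    `|matvec A w f - beta f| <= 2 * r + tau.
  move=> w [bw hw] f.
  have h1 := F1 w bw f.
  have h2 : `|matvec Ah w f - bh f| <= r + tau.
    apply: le_trans (supnorm_ge (fun f => matvec Ah w f - bh f) f) _.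
    by apply: le_trans hw _; lra.
  move: h1 h2; rewrite !ler_norml => /andP[a1 a2] /andP[b1 b2]; apply/andP; split; lra.
set S := [set objective A w | w in F0 A beta C].
set Sh := [set objective Ah w | w in expanded Ah bh C tau].
have Sne : S !=set0 by exists (objective A w0); exists w0.
have Shne : Sh !=set0 by have [w hw] := exp_ne; exists (objective Ah w); exists w.
have Slb : has_lbound S.
  exists (- (Bc k M C * 1)) => _ [w [bw _] <-].
  by have := FB w bw; rewrite ler_norml => /andP[].
have Sub : has_ubound S.
  exists (Bc k M C * 1) => _ [w [bw _] <-].
  by have := FB w bw; rewrite ler_norml => /andP[].
have Shlb : has_lbound Sh.
  exists (- (Bc k M C * 1) - Bc k M C * ea) => _ [w [bw _] <-].
  have := FB w bw; have := F2 w bw; rewrite !ler_norml => /andP[a1 a2] /andP[b1 b2]; lra.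
have Shub : has_ubound Sh.
  exists (Bc k M C * 1 + Bc k M C * ea) => _ [w [bw _] <-].
  have := FB w bw; have := F2 w bw; rewrite !ler_norml => /andP[a1 a2] /andP[b1 b2]; lra.
have F2' : forall w, box C w -> objective A w - Bc k M C * ea <= objective Ah w <= objective A w + Bc k M C * ea.
  by move=> w bw; have := F2 w bw; rewrite ler_norml => /andP[a1 a2]; apply/andP; split; lra.
set d := 2 * r + tau.
have d0 : 0 <= d by rewrite /d; lra.
have Bea0 : 0 <= Bc k M C * ea.
  by rewrite mulr_ge0 // /Bc !mulr_ge0 //; lra.
have i1 : thetahat_min Ah bh C tau <= theta_min A beta C + Bc k M C * ea.
  apply/ler_addgt0Pr => e e0.
  have [_ [w hw <-] he] := inf_adherent e0 (conj Sne Slb).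
  have : thetahat_min Ah bh C tau <= objective Ah w.
    by apply: (ge_inf Shlb); exists w => //; exact: F0exp.
  have /andP[_ h2] := F2' w (proj1 hw).
  rewrite (_ : theta_min A beta C = inf S) //; lra.
have i2 : theta_min A beta C - L1 * d - Bc k M C * ea <= thetahat_min Ah bh C tau.
  apply: lb_le_inf => // _ [w hw <-].
  have [w' [hw' hle]] := HL1 d w d0 (proj1 hw) (exp_res w hw).
  rewrite -!objectiveE in hle.
  have : theta_min A beta C <= objective A w' by apply: (ge_inf Slb); exists w'.
  have /andP[h1 _] := F2' w (proj1 hw).
  lra.
have i3 : theta_max A beta C <= thetahat_max Ah bh C tau + Bc k M C * ea.
  apply/ler_addgt0Pr => e e0.
  have [_ [w hw <-] he] := sup_adherent e0 (conj Sne Sub).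
  have : objective Ah w <= thetahat_max Ah bh C tau.
    by apply: (ub_le_sup Shub); exists w => //; exact: F0exp.
  have /andP[h1 _] := F2' w (proj1 hw).
  rewrite (_ : theta_max A beta C = sup S) //; lra.
have i4 : thetahat_max Ah bh C tau <= theta_max A beta C + L2 * d + Bc k M C * ea.
  apply: ge_sup => // _ [w hw <-].
  have [w' [hw' hle]] := HL2 d w d0 (proj1 hw) (exp_res w hw).
  rewrite !sumN_l in hle.
  have e1 := objectiveE A w; have e2 := objectiveE A w'.
  have : objective A w' <= theta_max A beta C by apply: (ub_le_sup Sub); exists w'.
  have /andP[_ h2] := F2' w (proj1 hw).
  lra.
have L1d : 0 <= L1 * d by apply: mulr_ge0.
have L2d : 0 <= L2 * d by apply: mulr_ge0.
rewrite mulrDl; split; rewrite ler_norml; apply/andP; split; lra.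
Qed.
End Det.

Lemma bigmax0_ge0 (R : realType) n (F : 'I_n -> R) : 0 <= \big[Num.max/0]_(j < n) F j.
Proof. by apply: (big_rec (fun x => 0 <= x)) => // i x _ hx; rewrite le_max hx orbT. Qed.

Unset Implicit Arguments.

Theorem theorem2 (R : realType) (d : measure_display) (T : measurableType d)
  (P : probability T R) (k M : nat) (hM : (1 <= M)%N)
  (A : 'I_k -> 'I_M -> R) (beta : 'I_k -> R) (C : R)
  (hA : forall f y, 0 <= A f y <= 1) (hbeta : forall f, 0 <= beta f <= 1)
  (hC : 0 < C) (hF0 : F0 A beta C !=set0)
  (Ahat : nat -> T -> 'I_k -> 'I_M -> R) (bhat : nat -> T -> 'I_k -> R)
  (hAhat : Op P (fun n t => \big[Num.max/0]_(f < k) \big[Num.max/0]_(y < M)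
                              `|Ahat n t f y - A f y|)
              (fun n => (Num.sqrt n%:R)^-1))
  (hbhat : Op P (fun n t => \big[Num.max/0]_(f < k) `|bhat n t f - beta f|)
              (fun n => (Num.sqrt n%:R)^-1))
  (kappa : nat -> R) (hkpos : forall n, 0 < kappa n)
  (hkinf : kappa @ \oo --> +oo)
  (hkrate : (fun n => kappa n / Num.sqrt n%:R) @ \oo --> (0 : R)) :
  Op P (fun n t => thetahat_min (Ahat n t) (bhat n t) C (kappa n / Num.sqrt n%:R)
                   - theta_min A beta C)
       (fun n => kappa n / Num.sqrt n%:R)
  /\
  Op P (fun n t => thetahat_max (Ahat n t) (bhat n t) C (kappa n / Num.sqrt n%:R)
                   - theta_max A beta C)
       (fun n => kappa n / Num.sqrt n%:R).
Proof.
have [L [L0 HL]] := det_main hA hC hF0.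
have key : forall eps : R, 0 < eps -> exists Mc : R, exists N : nat, forall n : nat, (N <= n)%N ->
   exists S : set T, [/\ measurable S, (P S <= eps%:E)%E &
     forall t, ~ S t ->
       `|thetahat_min (Ahat n t) (bhat n t) C (kappa n / Num.sqrt n%:R) - theta_min A beta C|
          <= Mc * (kappa n / Num.sqrt n%:R) /\
       `|thetahat_max (Ahat n t) (bhat n t) C (kappa n / Num.sqrt n%:R) - theta_max A beta C|
          <= Mc * (kappa n / Num.sqrt n%:R)].
  move=> eps e0.
  have e2 : 0 < eps / 2 by rewrite divr_gt0.
  have [K1 [N1 H1]] := hAhat (eps / 2) e2.
  have [K2 [N2 H2]] := hbhat (eps / 2) e2.
  pose Kb := Num.max 1 (M%:R * (`|K1| * C) + `|K2|).
  have [N3 _ H3] := (cvgryPge kappa).1 hkinf Kb.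
  exists (L * (2 * Kb + 1) + Bc k M C * `|K1|), (maxn (maxn N1 N2) (maxn N3 1)).
  move=> n hn.
  have [S1 [mS1 sub1 P1]] := H1 n ltac:(lia).
  have [S2 [mS2 sub2 P2]] := H2 n ltac:(lia).
  exists (S1 `|` S2); split.
  - exact: measurableU.
  - apply: le_trans (measureU2 P mS1 mS2) _.
    by rewrite [eps in (_ <= eps%:E)%E]splitr EFinD leeD.
  move=> t nS.
  have nS1 : ~ S1 t by move=> h; apply: nS; left.
  have nS2 : ~ S2 t by move=> h; apply: nS; right.
  set ea := \big[Num.max/0]_(f < k) \big[Num.max/0]_(y < M) `|Ahat n t f y - A f y|.
  set eb := \big[Num.max/0]_(f < k) `|bhat n t f - beta f|.
  set s := (Num.sqrt n%:R)^-1.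
  have hs : 0 < s by rewrite invr_gt0 sqrtr_gt0 ltr0n; lia.
  have ea0 : 0 <= ea by apply: bigmax0_ge0.
  have eb0 : 0 <= eb by apply: bigmax0_ge0.
  have hea : ea <= `|K1| * s.
    have : ~ (K1 * s < `|ea|) by move=> h; apply: nS1; apply: sub1.
    move/negP; rewrite -leNgt ger0_norm // => h; apply: le_trans h _.
    by apply: ler_wpM2r; [exact: ltW | exact: ler_norm].
  have heb : eb <= `|K2| * s.
    have : ~ (K2 * s < `|eb|) by move=> h; apply: nS2; apply: sub2.
    move/negP; rewrite -leNgt ger0_norm // => h; apply: le_trans h _.
    by apply: ler_wpM2r; [exact: ltW | exact: ler_norm].
  have hk : Kb <= kappa n by apply: H3; rewrite /=; lia.
  have Kb1 : 1 <= Kb by rewrite le_max lexx.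
  have Kb2 : M%:R * (`|K1| * C) + `|K2| <= Kb by rewrite le_max lexx orbT.
  have htau : kappa n / Num.sqrt n%:R = kappa n * s by [].
  have sle : s <= kappa n * s by apply: ler_peMl; [exact: ltW | lra].
  have Kbs : Kb * s <= kappa n * s by apply: ler_wpM2r => //; exact: ltW.
  have C0 : 0 <= C by exact: ltW.
  have f1 : M%:R * (ea * C) <= M%:R * ((`|K1| * s) * C).
    by apply: ler_wpM2l => //; apply: ler_wpM2r.
  have f2 : (M%:R * (`|K1| * C) + `|K2|) * s <= Kb * s by apply: ler_wpM2r => //; exact: ltW.
  have id1 : M%:R * ((`|K1| * s) * C) + `|K2| * s = (M%:R * (`|K1| * C) + `|K2|) * s by ring.
  have rle : M%:R * (ea * C) + eb <= Kb * s by lra.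
  have Kb0 : 0 <= Kb by lra.
  have KbsKbt : Kb * s <= Kb * (kappa n * s) by apply: ler_wpM2l.
  have tau0 : 0 < kappa n * s by rewrite mulr_gt0.
  have hAe : forall f y, `|Ahat n t f y - A f y| <= ea.
    move=> f y; apply: le_trans (bigmax_ge_ord _ f).
    exact: (bigmax_ge_ord (fun y => `|Ahat n t f y - A f y|) y).
  have hbe : forall f, `|bhat n t f - beta f| <= eb.
    by move=> f; apply: (bigmax_ge_ord (fun f => `|bhat n t f - beta f|) f).
  have [b1 b2] := HL (Ahat n t) (bhat n t) ea eb (kappa n * s) ea0 eb0 hAe hbe tau0 ltac:(lra).
  set bnd := L * _ + _ in b1 b2.
  suff : bnd <= (L * (2 * Kb + 1) + Bc k M C * `|K1|) * (kappa n * s).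
    by move=> hb; split; apply: le_trans hb.
  have g1 : L * (2 * (M%:R * (ea * C) + eb) + kappa n * s) <= L * ((2 * Kb + 1) * (kappa n * s)).
    by apply: ler_wpM2l => //; lra.
  have Bc0 : 0 <= Bc k M C by rewrite /Bc !mulr_ge0 //; lra.
  have g2 : Bc k M C * ea <= Bc k M C * (`|K1| * (kappa n * s)).
    apply: ler_wpM2l => //; apply: le_trans hea _; apply: ler_wpM2l => //; exact: normr_ge0.
  rewrite /bnd; have id2 : (L * (2 * Kb + 1) + Bc k M C * `|K1|) * (kappa n * s) =
     L * ((2 * Kb + 1) * (kappa n * s)) + Bc k M C * (`|K1| * (kappa n * s)) by ring.
  lra.
split => eps e0; have [Mc [N h]] := key eps e0; exists Mc, N => n hn;
  have [S [mS PS hS]] := h n hn; exists S; split => // t /= ht;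
  case: (pselect (S t)) => // /hS [h1 h2]; move: ht; by rewrite ltNge ?h1 ?h2.
Qed.
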